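(* Let $h:\mathbb{R}\to\mathbb{R}$ be a smooth function with $h(T)=\pi/2$ for $T\le 0$, $0<h(T)<\pi/2$ for $0<T<1$, and $h(T)=0$ for $T\ge 1$, and for $0\le T<1$ let $B(T)=\exp\left(\int_0^T \cot\bigl(h(z)\bigr)\,dz\right)$. Let $A>1$ be a constant. (i) Let $f(y,z)$ be a complex-valued function that is bounded for $y\in[-A,1-A]$ and $z\in[0,1+A]$. Then $$\lim_{y+A\to 1_-}\frac{1}{B(y+A)}\int_0^{y+A} B(z)\,f(y,z)\,dz=0.$$ (ii) If in addition $\partial_y f(y,z)$ is bounded for $y\in[-A,1-A]$ and $z\in[0,1+A]$, then $$\lim_{y+A\to 1_-}\partial_y\left(\frac{1}{B(y+A)}\int_0^{y+A} B(z)\,f(y,z)\,dz\right)=0.$$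
   Context: The limit $y+A\to 1_-$ means $y\to(1-A)$ from below, with $y+A\in(0,1)$. *)

(* Defs.v *)
From Stdlib Require Import Reals.
From Coquelicot Require Import Coquelicot.
Open Scope R_scope.

Definition smooth (h : R -> R) : Prop :=
  forall (n : nat) (x : R), ex_derive_n h n x.

Definition cutoff (h : R -> R) : Prop :=
  smooth h /\
  (forall T, T <= 0 -> h T = PI / 2) /\
  (forall T, 0 < T < 1 -> 0 < h T < PI / 2) /\
  (forall T, 1 <= T -> h T = 0).

Definition B (h : R -> R) (T : R) : R :=
  exp (@RInt R_CompleteNormedModule (fun z => cos (h z) / sin (h z)) 0 T).

Definition in_rect (A y z : R) : Prop :=
  -A <= y <= 1 - A /\ 0 <= z <= 1 + A.

Definition bounded_on_rect (A : R) (g : R -> R -> C) : Prop :=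
  exists M : R, forall y z, in_rect A y z -> Cmod (g y z) <= M.

Definition continuous_on_rect (A : R) (g : R -> R -> C) : Prop :=
  forall y z, in_rect A y z ->
  forall eps : R, 0 < eps -> exists delta : R, 0 < delta /\
    forall y' z', in_rect A y' z' -> Rabs (y' - y) < delta -> Rabs (z' - z) < delta ->
      Cmod (g y' z' - g y z) < eps.

Definition G (h : R -> R) (A : R) (f : R -> R -> C) (y : R) : C :=
  scal (/ B h (y + A))
    (@RInt C_R_CompleteNormedModule (fun z => (scal (B h z) (f y z) : C)) 0 (y + A)).

(* Main.v *)
Require Import Defs.
From Stdlib Require Import Reals Lra FunctionalExtensionality PropExtensionality Classical_Prop.
From Coquelicot Require Import Coquelicot.
Open Scope R_scope.

Definition kk (h : R -> R) z := cos (h z) / sin (h z).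
Definition phi (h : R -> R) z := sin (h z) / cos (h z).
Definition phi' (h : R -> R) z := Derive h z / (cos (h z))^2.
Definition Psi (h : R -> R) z := phi h z * B h z.
Definition Psi' (h : R -> R) z := B h z * (1 + phi' h z).

Lemma h_ex_derive h (Hh : cutoff h) x : ex_derive h x.
Proof. destruct Hh as [Hs _]. exact (Hs 1%nat x). Qed.

Lemma h_cont h (Hh : cutoff h) x : continuous h x.
Proof. exact (@ex_derive_continuous R_AbsRing R_NormedModule h x (h_ex_derive h Hh x)). Qed.

Lemma dh_cont h (Hh : cutoff h) x : continuous (Derive h) x.
Proof. destruct Hh as [Hs _]. exact (@ex_derive_continuous R_AbsRing R_NormedModule (Derive h) x (Hs 2%nat x)). Qed.

Lemma h_range h (Hh : cutoff h) z : z < 1 -> 0 < h z <= PI/2.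
Proof.
  destruct Hh as [_ [H0 [H1 H2]]]. intros Hz.
  destruct (Rle_or_lt z 0) as [Hz0|Hz0].
  - rewrite H0 by auto. pose proof PI_RGT_0. lra.
  - specialize (H1 z (conj Hz0 Hz)). lra.
Qed.

Lemma h_range' h (Hh : cutoff h) z : 0 < z -> 0 <= h z < PI/2.
Proof.
  destruct Hh as [_ [H0 [H1 H2]]]. intros Hz.
  destruct (Rlt_or_le z 1) as [Hz1|Hz1].
  - specialize (H1 z (conj Hz Hz1)). lra.
  - rewrite H2 by auto. pose proof PI_RGT_0. lra.
Qed.

Lemma sin_h_pos h (Hh : cutoff h) z : z < 1 -> 0 < sin (h z).
Proof.
  intros Hz. destruct (h_range h Hh z Hz). apply sin_gt_0; auto.
  pose proof PI_RGT_0. lra.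
Qed.

Lemma cos_h_nonneg h (Hh : cutoff h) z : z < 1 -> 0 <= cos (h z).
Proof.
  intros Hz. destruct (h_range h Hh z Hz). apply cos_ge_0; pose proof PI_RGT_0; lra.
Qed.

Lemma cos_h_pos h (Hh : cutoff h) z : 0 < z -> 0 < cos (h z).
Proof.
  intros Hz. destruct (h_range' h Hh z Hz). apply cos_gt_0; pose proof PI_RGT_0; lra.
Qed.

Lemma kk_nonneg h (Hh : cutoff h) z : z < 1 -> 0 <= kk h z.
Proof.
  intros Hz. unfold kk. pose proof (sin_h_pos h Hh z Hz). pose proof (cos_h_nonneg h Hh z Hz).
  unfold Rdiv. apply Rmult_le_pos; auto. left; apply Rinv_0_lt_compat; auto.
Qed.

Lemma kk_cont h (Hh : cutoff h) z : z < 1 -> continuous (kk h) z.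
Proof.
  intros Hz. unfold kk. apply (continuous_mult (fun z => cos (h z)) (fun z => / sin (h z))).
  - apply (continuous_comp h cos). apply h_cont; auto.
    apply continuity_pt_filterlim. apply continuity_cos.
  - apply continuous_Rinv_comp.
    + apply (continuous_comp h sin). apply h_cont; auto.
      apply continuity_pt_filterlim. apply continuity_sin.
    + pose proof (sin_h_pos h Hh z Hz). lra.
Qed.

Lemma locR (x : R) (P : R -> Prop) :
  (exists d, 0 < d /\ forall y, Rabs (y - x) < d -> P y) -> locally x P.
Proof.
  intros [d [Hd H]]. exists (mkposreal d Hd). intros y Hy. apply H. exact Hy.
Qed.

Lemma locR_elim (x : R) (P : R -> Prop) :
  locally x P -> exists d, 0 < d /\ forall y, Rabs (y - x) < d -> P y.
Proof.
  intros [d H]. exists d. split. apply cond_pos. intros y Hy. apply H. exact Hy.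
Qed.

Lemma cont_R_elim (f : R -> R) x : continuous f x ->
  forall eps, 0 < eps -> exists d, 0 < d /\ forall y, Rabs (y - x) < d -> Rabs (f y - f x) < eps.
Proof.
  intros Hc eps He.
  assert (H := Hc (ball (f x) (mkposreal eps He)) (locally_ball _ _)).
  apply locR_elim in H. destruct H as [d [Hd H]]. exists d. split; [exact Hd|].
  intros y Hy. apply (H y Hy).
Qed.

Lemma kk_exRInt h (Hh : cutoff h) b : b < 1 -> ex_RInt (kk h) 0 b.
Proof.
  intros Hb. apply (@ex_RInt_continuous R_CompleteNormedModule). intros z Hz. apply kk_cont; auto.
  destruct Hz as [_ Hz]. apply Rle_lt_trans with (1 := Hz). apply Rmax_lub_lt; lra.
Qed.

Lemma Lk_deriv h (Hh : cutoff h) T : T < 1 ->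
  is_derive (fun T => RInt (kk h) 0 T) T (kk h T).
Proof.
  intros HT. apply is_derive_RInt with (a := 0).
  - apply locR. exists (1 - T). split. lra. intros y Hy.
    apply RInt_correct. apply kk_exRInt; auto.
    apply Rabs_lt_between in Hy. lra.
  - apply kk_cont; auto.
Qed.

Lemma B_eq h T : B h T = exp (RInt (kk h) 0 T).
Proof. reflexivity. Qed.

Lemma B_deriv h (Hh : cutoff h) T : T < 1 -> is_derive (B h) T (kk h T * B h T).
Proof.
  intros HT.
  apply is_derive_ext with (f := fun T => exp (RInt (kk h) 0 T)).
  { intros t. reflexivity. }
  apply (is_derive_comp exp (fun T => RInt (kk h) 0 T)).
  apply is_derive_exp. apply Lk_deriv; auto.
Qed.

Lemma B_pos h T : 0 < B h T.
Proof. apply exp_pos. Qed.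

Lemma B_cont h (Hh : cutoff h) T : T < 1 -> continuous (B h) T.
Proof.
  intros HT. apply (@ex_derive_continuous R_AbsRing R_NormedModule).
  eexists. apply B_deriv; auto.
Qed.

Lemma B_0 h : B h 0 = 1.
Proof. rewrite B_eq, RInt_point. apply exp_0. Qed.

Lemma B_mono h (Hh : cutoff h) z s : z <= s < 1 -> B h z <= B h s.
Proof.
  intros [Hzs Hs1].
  destruct (MVT_gen (B h) z s (fun t => kk h t * B h t)) as [c [Hc Heq]].
  - intros x Hx. apply B_deriv; auto. rewrite Rmax_right in Hx; lra.
  - intros x Hx. apply continuity_pt_filterlim. apply B_cont; auto.
    rewrite Rmax_right in Hx; lra.
  - rewrite Rmin_left in Hc by lra. rewrite Rmax_right in Hc by lra.
    assert (0 <= kk h c * B h c * (s - z)).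
    { apply Rmult_le_pos; [apply Rmult_le_pos|]. apply kk_nonneg; auto; lra.
      left; apply B_pos. lra. }
    lra.
Qed.

Lemma Dh1 h (Hh : cutoff h) : Derive h 1 = 0.
Proof.
  pose proof (Derive_correct h 1 (h_ex_derive h Hh 1)) as Hd.
  apply is_derive_Reals in Hd.
  set (l := Derive h 1) in *.
  destruct Hh as [_ [_ [_ H2]]].
  destruct (Req_dec l 0) as [E|E]; auto. exfalso.
  destruct (Hd (Rabs l) (Rabs_pos_lt _ E)) as [d Hdd].
  assert (Hp : 0 < d / 2) by (pose proof (cond_pos d); lra).
  assert (Hne : d / 2 <> 0) by lra.
  assert (Hlt : Rabs (d/2) < d) by (rewrite Rabs_pos_eq by lra; pose proof (cond_pos d); lra).
  specialize (Hdd (d/2) Hne Hlt).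
  rewrite (H2 (1 + d/2)) in Hdd by lra. rewrite (H2 1) in Hdd by lra.
  replace ((0 - 0) / (d / 2) - l) with (- l) in Hdd by (field; lra).
  rewrite Rabs_Ropp in Hdd. lra.
Qed.

Lemma phi_deriv h (Hh : cutoff h) z : 0 < z -> is_derive (phi h) z (phi' h z).
Proof.
  intros Hz. pose proof (cos_h_pos h Hh z Hz) as Hc.
  unfold phi, phi'.
  auto_derive.
  - pose proof (h_ex_derive h Hh z). repeat split; auto. lra.
  - pose proof (sin2_cos2 (h z)) as E. unfold Rsqr in E.
    change (Derive (fun x => h x) z) with (Derive h z).
    replace (Derive h z / cos (h z) ^ 2) with
      (Derive h z * (sin (h z) * sin (h z) + cos (h z) * cos (h z)) / cos (h z) ^ 2)
      by (rewrite E; field; lra).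
    field. lra.
Qed.

Lemma h1 h (Hh : cutoff h) : h 1 = 0.
Proof. destruct Hh as [_ [_ [_ H2]]]. apply H2; lra. Qed.

Lemma phi_1 h (Hh : cutoff h) : phi h 1 = 0.
Proof. unfold phi. rewrite h1, sin_0; auto. unfold Rdiv. ring. Qed.

Lemma phi'_1 h (Hh : cutoff h) : phi' h 1 = 0.
Proof. unfold phi'. rewrite Dh1; auto. unfold Rdiv. ring. Qed.

Lemma phi'_cont h (Hh : cutoff h) z : 0 < z -> continuous (phi' h) z.
Proof.
  intros Hz. unfold phi'.
  pose proof (cos_h_pos h Hh z Hz) as Hc.
  apply (continuous_mult (Derive h) (fun z => / (cos (h z) ^ 2))).
  - apply dh_cont; auto.
  - apply continuous_Rinv_comp.
    + apply (continuous_comp (fun z => cos (h z)) (fun x => x ^ 2)).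
      * apply (continuous_comp h cos). apply h_cont; auto.
        apply continuity_pt_filterlim. apply continuity_cos.
      * apply continuity_pt_filterlim. apply derivable_continuous_pt.
        apply derivable_pt_pow.
    + apply pow_nonzero. lra.
Qed.

Lemma near1 h (Hh : cutoff h) eps d : 0 < eps -> 0 < d ->
  exists s, 0 < s < 1 /\ 1 - d < s /\ forall z, s <= z <= 1 -> Rabs (phi' h z) <= eps.
Proof.
  intros He Hd.
  destruct (cont_R_elim (phi' h) 1 (phi'_cont h Hh 1 Rlt_0_1) eps He) as [dl [Hdl H]].
  set (m := Rmin (Rmin dl d) 1).
  assert (Hm : 0 < m) by (unfold m; repeat apply Rmin_glb_lt; lra).
  assert (Hm1 : m <= 1) by (unfold m; apply Rmin_r).
  assert (Hm2 : m <= dl) by (unfold m; eapply Rle_trans; [apply Rmin_l|apply Rmin_l]).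
  assert (Hm3 : m <= d) by (unfold m; eapply Rle_trans; [apply Rmin_l|apply Rmin_r]).
  exists (1 - m / 2). split; [lra|]. split; [lra|].
  intros z Hz. specialize (H z). rewrite phi'_1 in H; auto.
  rewrite Rminus_0_r in H. left. apply H.
  rewrite Rabs_left1 by lra. lra.
Qed.

Lemma phi_pos h (Hh : cutoff h) z : 0 < z < 1 -> 0 < phi h z.
Proof.
  intros [H0 H1]. unfold phi. apply Rdiv_lt_0_compat.
  apply sin_h_pos; auto. apply cos_h_pos; auto.
Qed.

Lemma kk_phi h (Hh : cutoff h) z : 0 < z < 1 -> kk h z * phi h z = 1.
Proof.
  intros [H0 H1]. unfold kk, phi.
  pose proof (sin_h_pos h Hh z H1). pose proof (cos_h_pos h Hh z H0).
  field. lra.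
Qed.

Lemma phi_bound h (Hh : cutoff h) s eps : 0 < s < 1 ->
  (forall z, s <= z <= 1 -> Rabs (phi' h z) <= eps) ->
  forall z, s <= z <= 1 -> phi h z <= eps * (1 - z).
Proof.
  intros Hs Hb z Hz.
  destruct (Req_dec z 1) as [E|E].
  { subst. rewrite phi_1; auto. lra. }
  destruct (MVT_gen (phi h) z 1 (phi' h)) as [c [Hc Heq]].
  - intros x Hx. rewrite Rmin_left in Hx by lra. apply phi_deriv; auto. lra.
  - intros x Hx. rewrite Rmin_left in Hx by lra. rewrite Rmax_right in Hx by lra.
    apply continuity_pt_filterlim.
    apply (@ex_derive_continuous R_AbsRing R_NormedModule).
    eexists. apply phi_deriv; auto. lra.
  - rewrite Rmin_left in Hc by lra. rewrite Rmax_right in Hc by lra.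
    rewrite phi_1 in Heq; auto.
    specialize (Hb c ltac:(lra)). apply Rabs_le_between in Hb.
    assert (phi' h c * (1 - z) >= - eps * (1 - z)) by (apply Rle_ge, Rmult_le_compat_r; lra).
    lra.
Qed.

Lemma Psi_deriv h (Hh : cutoff h) z : 0 < z < 1 -> is_derive (Psi h) z (Psi' h z).
Proof.
  intros Hz.
  assert (H := is_derive_mult (phi h) (B h) z _ _ (phi_deriv h Hh z ltac:(lra))
                 (B_deriv h Hh z ltac:(lra)) (fun n m => Rmult_comm n m)).
  unfold plus, mult in H; simpl in H.
  replace (Psi' h z) with (phi' h z * B h z + phi h z * (kk h z * B h z)).
  exact H.
  unfold Psi'. pose proof (kk_phi h Hh z Hz).
  replace (phi h z * (kk h z * B h z)) with ((kk h z * phi h z) * B h z) by ring.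
  rewrite H0. ring.
Qed.

Lemma Psi'_cont h (Hh : cutoff h) z : 0 < z < 1 -> continuous (Psi' h) z.
Proof.
  intros Hz. unfold Psi'.
  apply (continuous_mult (B h) (fun z => 1 + phi' h z)).
  - apply (B_cont h Hh); lra.
  - apply (continuous_plus (fun _ => 1) (phi' h)).
    apply continuous_const. apply (phi'_cont h Hh); lra.
Qed.

Lemma Psi_pos h (Hh : cutoff h) z : 0 < z < 1 -> 0 < Psi h z.
Proof. intros Hz. unfold Psi. apply Rmult_lt_0_compat. apply phi_pos; auto. apply B_pos. Qed.

Lemma Psi'_ge h z eps : eps <= 1/2 -> Rabs (phi' h z) <= eps -> B h z <= 2 * Psi' h z.
Proof.
  intros He Hb. unfold Psi'. apply Rabs_le_between in Hb. pose proof (B_pos h z).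
  assert (B h z * (1/2) <= B h z * (1 + phi' h z)) by (apply Rmult_le_compat_l; lra).
  lra.
Qed.

Lemma R_mono h (Hh : cutoff h) s eps : 0 < s < 1 -> eps <= 1/2 ->
  (forall z, s <= z <= 1 -> Rabs (phi' h z) <= eps) ->
  forall T, s <= T < 1 -> Psi h s * (1 - s) <= Psi h T * (1 - T).
Proof.
  intros Hs He Hb T HT.
  destruct (Req_dec s T) as [E|E]. { subst; lra. }
  destruct (MVT_gen (fun z => Psi h z * (1 - z)) s T
              (fun z => Psi' h z * (1 - z) - Psi h z)) as [c [Hc Heq]].
  - intros x Hx. rewrite Rmin_left in Hx by lra. rewrite Rmax_right in Hx by lra.
    assert (H := is_derive_mult (Psi h) (fun z => 1 - z) x _ _ (Psi_deriv h Hh x ltac:(lra))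
                 (is_derive_minus (fun _ => 1) (fun z => z) x _ _ (is_derive_const 1 x) (is_derive_id x))
                 (fun n m => Rmult_comm n m)).
    unfold plus, mult, minus, opp, zero, one in H; simpl in H.
    replace (Psi' h x * (1 - x) - Psi h x) with (Psi' h x * (1 - x) + Psi h x * (0 + - (1))) by ring.
    exact H.
  - intros x Hx. rewrite Rmin_left in Hx by lra. rewrite Rmax_right in Hx by lra.
    apply continuity_pt_filterlim.
    apply (continuous_mult (Psi h) (fun z => 1 - z)).
    + apply (@ex_derive_continuous R_AbsRing R_NormedModule).
      eexists. apply Psi_deriv; auto. lra.
    + apply (continuous_minus (fun _ => 1) (fun z => z)). apply continuous_const. apply continuous_id.
  - rewrite Rmin_left in Hc by lra. rewrite Rmax_right in Hc by lra.
    assert (Hpb := phi_bound h Hh s eps Hs Hb c ltac:(lra)).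
    assert (Hg := Hb c ltac:(lra)). apply Rabs_le_between in Hg.
    assert (0 <= Psi' h c * (1 - c) - Psi h c).
    { unfold Psi', Psi. pose proof (B_pos h c).
      assert (B h c * (1 - c) * (1 - 2 * eps) <= B h c * (1 + phi' h c) * (1 - c) - phi h c * B h c).
      { assert (phi h c * B h c <= eps * (1 - c) * B h c) by (apply Rmult_le_compat_r; lra).
        assert (B h c * (1 - eps) * (1 - c) <= B h c * (1 + phi' h c) * (1 - c)).
        { apply Rmult_le_compat_r. lra. apply Rmult_le_compat_l; lra. }
        nra. }
      assert (0 <= B h c * (1 - c) * (1 - 2 * eps)).
      { apply Rmult_le_pos. apply Rmult_le_pos; lra. lra. }
      lra. }
    assert (0 <= (Psi' h c * (1 - c) - Psi h c) * (T - s)) by (apply Rmult_le_pos; lra).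
    lra.
Qed.

Lemma Psi_int h (Hh : cutoff h) s T : 0 < s <= T -> T < 1 ->
  is_RInt (Psi' h) s T (Psi h T - Psi h s).
Proof.
  intros Hs HT.
  apply (@is_RInt_derive R_CompleteNormedModule (Psi h) (Psi' h) s T).
  - intros x Hx. rewrite Rmin_left in Hx by lra. rewrite Rmax_right in Hx by lra.
    apply Psi_deriv; auto. lra.
  - intros x Hx. rewrite Rmin_left in Hx by lra. rewrite Rmax_right in Hx by lra.
    apply Psi'_cont; auto. lra.
Qed.

Lemma Lub_True : Lub_Rbar (fun _ : R => True) = p_infty.
Proof.
apply is_lub_Rbar_unique. split.
- intros x _. simpl. auto.
- intros l Hl. destruct l as [l| |]; simpl; auto.
  + specialize (Hl (l+1) I). simpl in Hl. lra.
  + specialize (Hl 0 I). simpl in Hl. auto.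
Qed.

Lemma RInt_C_garbage (g : R -> C) a b : ~ @ex_RInt C_R_NormedModule g a b ->
  @RInt C_R_CompleteNormedModule g a b = (0,0).
Proof.
intros H. unfold RInt, iota.
match goal with |- lim ?F = _ => replace F with (fun _ : C -> Prop => True) end.
2:{ apply functional_extensionality; intros P.
  apply propositional_extensionality; split; auto.
  intros _ x Hx. exfalso; apply H; exists x; exact Hx. }
simpl. unfold lim. simpl. unfold C_complete_lim. simpl. unfold R_complete_lim. simpl.
rewrite Lub_True. reflexivity.
Qed.

Lemma RInt_C_comp (F : R -> C) a b : @ex_RInt C_R_NormedModule F a b ->
  @RInt C_R_CompleteNormedModule F a b = (RInt (fun t => fst (F t)) a b, RInt (fun t => snd (F t)) a b).
Proof.
  intros [l Hl].
  rewrite (@is_RInt_unique C_R_CompleteNormedModule F a b l Hl).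
  pose proof (@is_RInt_fct_extend_fst R_NormedModule R_NormedModule F a b l Hl) as H1.
  pose proof (@is_RInt_fct_extend_snd R_NormedModule R_NormedModule F a b l Hl) as H2.
  assert (E1 : RInt (fun t => fst (F t)) a b = fst l) by (apply (@is_RInt_unique R_CompleteNormedModule); exact H1).
  assert (E2 : RInt (fun t => snd (F t)) a b = snd l) by (apply (@is_RInt_unique R_CompleteNormedModule); exact H2).
  rewrite E1, E2.
  destruct l; reflexivity.
Qed.

Lemma exRInt_C (F : R -> C) a b : ex_RInt (fun t => fst (F t)) a b ->
  ex_RInt (fun t => snd (F t)) a b -> @ex_RInt C_R_NormedModule F a b.
Proof.
  intros [l1 H1] [l2 H2]. exists (l1, l2).
  apply (@is_RInt_fct_extend_pair R_NormedModule R_NormedModule F a b l1 l2 H1 H2).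
Qed.

Lemma normC (x : C) : @norm R_AbsRing C_R_NormedModule x = Cmod x.
Proof.
  destruct x as [a b]. unfold norm. simpl. unfold prod_norm, Cmod. simpl.
  unfold norm; simpl. unfold abs; simpl. f_equal.
  rewrite !Rmult_1_r. rewrite <- !Rabs_mult. rewrite !Rabs_pos_eq; auto;
  apply Rle_0_sqr.
Qed.

Lemma atleft_crit (A : R) (g : R -> C) :
  (forall eta, 0 < eta -> exists s, s < 1 /\ forall y, s - A <= y < 1 - A -> Cmod (g y) < eta) ->
  filterlim g (at_left (1 - A)) (locally (0 : C)).
Proof.
  intros H. apply (filterlim_locally (F := at_left (1 - A))). intros eps.
  destruct (H eps (cond_pos eps)) as [s [Hs1 Hs]].
  assert (Hp : 0 < 1 - s) by lra. exists (mkposreal (1 - s) Hp). intros y Hy Hy2.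
  apply (norm_compat1 (V := C_R_NormedModule)).
  assert (E : @minus (NormedModule.AbelianGroup R_AbsRing C_R_NormedModule) (g y) (RtoC 0) = g y).
  { destruct (g y) as [u v]. unfold minus, plus, opp. simpl.
      unfold prod_plus, prod_opp. simpl. unfold plus, opp; simpl. f_equal; ring. }
  rewrite E, normC.
  apply Hs. split; [|exact Hy2].
  change (Rabs (y - (1 - A)) < 1 - s) in Hy. apply Rabs_lt_between in Hy. lra.
Qed.

Lemma est0 h (Hh : cutoff h) s (Hs : 0 < s < 1)
  (Hb : forall z, s <= z <= 1 -> Rabs (phi' h z) <= 1/2)
  (g : R -> C) M T (HT : s <= T < 1)
  (Hg : forall z, 0 <= z <= T -> Cmod (g z) <= M)
  (Hi : @ex_RInt C_R_NormedModule (fun z => scal (B h z) (g z)) 0 T) :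
  Cmod (@RInt C_R_CompleteNormedModule (fun z => scal (B h z) (g z)) 0 T)
    <= M * s * B h s + 2 * M * Psi h T.
Proof.
  assert (HM : 0 <= M) by (eapply Rle_trans; [apply Cmod_ge_0| apply (Hg 0); lra]).
  set (F := fun z => scal (B h z) (g z) : C_R_NormedModule).
  assert (Hi1 : @ex_RInt C_R_NormedModule F 0 s) by (apply (@ex_RInt_Chasles_1 C_R_CompleteNormedModule F 0 s T); [lra|exact Hi]).
  assert (Hi2 : @ex_RInt C_R_NormedModule F s T) by (apply (@ex_RInt_Chasles_2 C_R_CompleteNormedModule F 0 s T); [lra|exact Hi]).
  apply (@RInt_correct C_R_CompleteNormedModule) in Hi1. apply (@RInt_correct C_R_CompleteNormedModule) in Hi2.
  pose proof (is_RInt_Chasles F 0 s T _ _ Hi1 Hi2) as Hc.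
  change (@RInt C_R_CompleteNormedModule (fun z => scal (B h z) (g z)) 0 T) with (@RInt C_R_CompleteNormedModule F 0 T).
  rewrite <- normC.
  rewrite (@is_RInt_unique C_R_CompleteNormedModule F 0 T _ Hc).
  eapply Rle_trans. apply (@norm_triangle R_AbsRing C_R_NormedModule). apply Rplus_le_compat.
  - assert (Hc1 := @is_RInt_const R_NormedModule 0 s (M * B h s)).
    eapply Rle_trans. apply (norm_RInt_le F (fun _ => M * B h s) 0 s _ _ ltac:(lra) ) ; [|exact Hi1|exact Hc1].
    + intros x Hx. unfold F. eapply Rle_trans. apply (@norm_scal R_AbsRing C_R_NormedModule).
      rewrite normC. change (Rabs (B h x) * Cmod (g x) <= M * B h s).
      rewrite Rabs_pos_eq by (left; apply B_pos).
      rewrite Rmult_comm. apply Rmult_le_compat; try apply Cmod_ge_0; try (left; apply B_pos).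
      apply Hg; lra. apply (B_mono h Hh); lra.
    + change ((s - 0) * (M * B h s) <= M * s * B h s). right; ring.
  - assert (Hp := Psi_int h Hh s T ltac:(lra) ltac:(lra)).
    assert (Hp2 := @is_RInt_scal R_NormedModule (Psi' h) s T (2 * M) _ Hp).
    eapply Rle_trans. apply (norm_RInt_le F (fun y => scal (2 * M) (Psi' h y)) s T _ _ ltac:(lra)); [|exact Hi2|exact Hp2].
    + intros x Hx. unfold F. eapply Rle_trans. apply (@norm_scal R_AbsRing C_R_NormedModule).
      rewrite normC. change (Rabs (B h x) * Cmod (g x) <= 2 * M * Psi' h x).
      rewrite Rabs_pos_eq by (left; apply B_pos).
      assert (Hb2 := Psi'_ge h x (1/2) ltac:(lra) (Hb x ltac:(lra))).
      assert (Cmod (g x) <= M) by (apply Hg; lra).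
      pose proof (B_pos h x). pose proof (Cmod_ge_0 (g x)). nra.
    + change (2 * M * (Psi h T - Psi h s) <= 2 * M * Psi h T).
      pose proof (Psi_pos h Hh s ltac:(lra)). nra.
Qed.

Lemma G_scal_bound (r : R) (x : C) : Cmod (scal r x) <= Rabs r * Cmod x.
Proof. rewrite <- !normC. apply (@norm_scal R_AbsRing C_R_NormedModule). Qed.

Lemma part_i h (Hh : cutoff h) A (HA : 1 < A) (g : R -> R -> C) :
  bounded_on_rect A g ->
  forall eta, 0 < eta -> exists s, s < 1 /\ forall y, s - A <= y < 1 - A -> Cmod (G h A g y) < eta.
Proof.
  intros [M HM] eta Heta.
  assert (HM0 : 0 <= M).
  { eapply Rle_trans. apply Cmod_ge_0. apply (HM (-A) 0). split; lra. }
  destruct (near1 h Hh (1/2) 1 ltac:(lra) ltac:(lra)) as [s0 [Hs0 [_ Hb0]]].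
  set (R0 := Psi h s0 * (1 - s0)).
  assert (HR0 : 0 < R0) by (unfold R0; apply Rmult_lt_0_compat; [apply Psi_pos; auto|lra]).
  set (K := M * s0 * B h s0).
  assert (HK : 0 <= K) by (unfold K; apply Rmult_le_pos; [apply Rmult_le_pos; lra| left; apply B_pos]).
  set (C0 := K / (2 * R0) + M).
  assert (HC0 : 0 <= C0) by (unfold C0; apply Rplus_le_le_0_compat; auto; apply Rdiv_le_0_compat; lra).
  exists (Rmax s0 (1 - eta / (C0 + 1))). split.
  { apply Rmax_lub_lt. lra. assert (0 < eta / (C0 + 1)) by (apply Rdiv_lt_0_compat; lra). lra. }
  intros y Hy.
  set (T := y + A).
  assert (HT0 : s0 <= T < 1) by (pose proof (Rmax_l s0 (1 - eta / (C0 + 1))); unfold T; lra).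
  assert (HT1 : 1 - T <= eta / (C0 + 1)) by (pose proof (Rmax_r s0 (1 - eta / (C0 + 1))); unfold T; lra).
  assert (Hfin : C0 * (1 - T) < eta).
  { apply Rle_lt_trans with (C0 * (eta / (C0 + 1))). apply Rmult_le_compat_l; auto.
    unfold Rdiv. rewrite <- Rmult_assoc. apply Rmult_lt_reg_r with (C0 + 1). lra.
    rewrite Rmult_assoc, Rinv_l by lra. nra. }
  unfold G. fold T.
  destruct (Classical_Prop.classic (@ex_RInt C_R_NormedModule (fun z => scal (B h z) (g y z)) 0 T)) as [Hi|Hi].
  2:{ rewrite RInt_C_garbage by exact Hi. eapply Rle_lt_trans. apply G_scal_bound.
      replace (Cmod (0,0)) with 0 by (symmetry; apply Cmod_0). rewrite Rmult_0_r. exact Heta. }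
  assert (He := est0 h Hh s0 Hs0 Hb0 (g y) M T HT0).
  assert (He' : Cmod (@RInt C_R_CompleteNormedModule (fun z => scal (B h z) (g y z)) 0 T) <= K + 2 * M * Psi h T).
  { apply He; auto. intros z Hz. apply HM. unfold in_rect. unfold T in *. split; lra. }
  clear He.
  eapply Rle_lt_trans. apply G_scal_bound.
  pose proof (B_pos h T) as HB.
  rewrite Rabs_pos_eq by (left; apply Rinv_0_lt_compat; auto).
  assert (Hphi := phi_bound h Hh s0 (1/2) Hs0 Hb0 T ltac:(lra)).
  assert (HR := R_mono h Hh s0 (1/2) Hs0 ltac:(lra) Hb0 T HT0). fold R0 in HR.
  assert (Hphip : 0 < phi h T) by (apply phi_pos; auto; lra).
  unfold Psi in *.
  assert (H3 : / B h T * (2 * R0) <= 1 - T).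
  { apply Rle_trans with (/ B h T * (2 * (phi h T * B h T * (1 - T)))).
    apply Rmult_le_compat_l. left; apply Rinv_0_lt_compat; auto. lra.
    replace (/ B h T * (2 * (phi h T * B h T * (1 - T)))) with (2 * phi h T * (1 - T)) by (field; lra).
    nra. }
  assert (H4 : / B h T * (K + 2 * M * (phi h T * B h T)) = K * / B h T + 2 * M * phi h T) by (field; lra).
  apply Rle_lt_trans with (/ B h T * (K + 2 * M * (phi h T * B h T))).
  { apply Rmult_le_compat_l. left; apply Rinv_0_lt_compat; auto. exact He'. }
  rewrite H4.
  apply Rle_lt_trans with (C0 * (1 - T)); [|exact Hfin].
  unfold C0.
  assert (K * / B h T <= K / (2 * R0) * (1 - T)).
  { unfold Rdiv. replace (K * / (2 * R0) * (1 - T)) with (K * ((1 - T) / (2 * R0))) by (field; lra).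
    apply Rmult_le_compat_l; auto.
    apply Rmult_le_reg_r with (2 * R0). lra.
    replace ((1 - T) / (2 * R0) * (2 * R0)) with (1 - T) by (field; lra). lra. }
  nra.
Qed.

Definition cl (a b u : R) := Rmax a (Rmin u b).

Lemma cl_in a b u : a <= b -> a <= cl a b u <= b.
Proof.
  intros Hab. unfold cl. split. apply Rmax_l. apply Rmax_lub. auto. apply Rmin_r.
Qed.

Lemma cl_id a b u : a <= u <= b -> cl a b u = u.
Proof.
  intros [H1 H2]. unfold cl. rewrite Rmin_left by auto. rewrite Rmax_right by auto. auto.
Qed.

Lemma cl_lip a b u v : a <= b -> Rabs (cl a b u - cl a b v) <= Rabs (u - v).
Proof.
  intros Hab. unfold cl.
  unfold Rmax, Rmin; repeat destruct Rle_dec; repeat destruct Rle_dec;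
  unfold Rabs; repeat destruct Rcase_abs; lra.
Qed.

Lemma fst_bound (a b : C) : Rabs (fst a - fst b) <= Cmod (Cminus a b).
Proof. apply (re_le_Cmod (Cminus a b)). Qed.

Lemma snd_bound (a b : C) : Rabs (snd a - snd b) <= Cmod (Cminus a b).
Proof.
  eapply Rle_trans; [|apply (Rmax_Cmod (Cminus a b))].
  eapply Rle_trans; [|apply Rmax_r]. right. destruct a, b. reflexivity.
Qed.

Lemma cont2d_clamp A (HA : 1 < A) (g : R -> R -> C) (pr : C -> R)
  (Hpr : forall a b, Rabs (pr a - pr b) <= Cmod (Cminus a b)) :
  continuous_on_rect A g ->
  forall x y, continuity_2d_pt (fun u v => pr (g (cl (-A) (1-A) u) (cl 0 (1+A) v))) x y.
Proof.
  intros Hc x y eps.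
  assert (Hr : in_rect A (cl (-A) (1-A) x) (cl 0 (1+A) y)) by (split; apply cl_in; lra).
  destruct (Hc _ _ Hr eps (cond_pos eps)) as [d [Hd H]].
  exists (mkposreal d Hd). intros u v Hu Hv. simpl in Hu, Hv.
  eapply Rle_lt_trans. apply Hpr. apply H.
  split; apply cl_in; lra.
  eapply Rle_lt_trans. apply cl_lip; lra. exact Hu.
  eapply Rle_lt_trans. apply cl_lip; lra. exact Hv.
Qed.

Lemma c2d_snd (F : R -> R -> R) x y : continuity_2d_pt F x y -> continuous (fun v => F x v) y.
Proof.
  intros H. apply (filterlim_locally (F := locally y)). intros eps.
  destruct (H eps) as [d Hd]. exists d. intros v Hv.
  change (Rabs (F x v - F x y) < eps). apply Hd. rewrite Rminus_eq_0, Rabs_R0. apply cond_pos.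
  exact Hv.
Qed.

Lemma c2d_B h (Hh : cutoff h) x t : t < 1 -> continuity_2d_pt (fun _ v => B h v) x t.
Proof.
  intros Ht eps. destruct (cont_R_elim (B h) t (B_cont h Hh t Ht) eps (cond_pos eps)) as [d [Hd H]].
  exists (mkposreal d Hd). intros u v Hu Hv. apply H. exact Hv.
Qed.

Lemma cont1d_clamp A (HA : 1 < A) (g : R -> R -> C) (pr : C -> R)
  (Hpr : forall a b, Rabs (pr a - pr b) <= Cmod (Cminus a b)) :
  continuous_on_rect A g -> forall y t, -A <= y <= 1 - A ->
  continuous (fun v => pr (g y (cl 0 (1+A) v))) t.
Proof.
  intros Hc y t Hy.
  assert (H := c2d_snd _ y t (cont2d_clamp A HA g pr Hpr Hc y t)).
  simpl in H. rewrite (cl_id (-A) (1-A) y Hy) in H. exact H.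
Qed.

Lemma exRInt_comp h (Hh : cutoff h) A (HA : 1 < A) (g : R -> R -> C) (pr : C -> R)
  (Hpr : forall a b, Rabs (pr a - pr b) <= Cmod (Cminus a b)) :
  continuous_on_rect A g -> forall y a b, -A <= y <= 1 - A -> 0 <= a <= b -> b < 1 ->
  ex_RInt (fun z => B h z * pr (g y z)) a b.
Proof.
  intros Hc y a b Hy Hab Hb.
  apply (@ex_RInt_ext R_NormedModule (fun z => B h z * pr (g y (cl 0 (1+A) z)))).
  { intros x Hx. rewrite Rmin_left in Hx by lra. rewrite Rmax_right in Hx by lra.
    rewrite cl_id by lra. reflexivity. }
  apply (@ex_RInt_continuous R_CompleteNormedModule). intros z Hz.
  rewrite Rmin_left in Hz by lra. rewrite Rmax_right in Hz by lra.
  apply (continuous_mult (B h) (fun v => pr (g y (cl 0 (1+A) v)))).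
  apply (B_cont h Hh); lra.
  apply cont1d_clamp; auto.
Qed.

Lemma G_comp h (Hh : cutoff h) A (HA : 1 < A) (g : R -> R -> C) :
  continuous_on_rect A g -> forall y, -A <= y < 1 - A ->
  G h A g y = (/ B h (y + A) * RInt (fun z => B h z * fst (g y z)) 0 (y + A),
               / B h (y + A) * RInt (fun z => B h z * snd (g y z)) 0 (y + A)).
Proof.
  intros Hc y Hy. unfold G.
  rewrite RInt_C_comp.
  - reflexivity.
  - apply exRInt_C.
    + apply (exRInt_comp h Hh A HA g fst fst_bound Hc y 0 (y + A)); lra.
    + apply (exRInt_comp h Hh A HA g snd snd_bound Hc y 0 (y + A)); lra.
Qed.

Lemma is_derive_fst (F : R -> C) x (l : C) :
  @is_derive R_AbsRing C_R_NormedModule F x l -> is_derive (fun y => fst (F y)) x (fst l).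
Proof.
  intros H. unfold is_derive in *.
  assert (H2 := @filterdiff_comp R_AbsRing R_NormedModule
     (prod_NormedModule R_AbsRing R_NormedModule R_NormedModule) R_NormedModule
     (locally x) _ F fst (fun y => scal y l) fst H
     (filterdiff_linear _ is_linear_fst)).
  eapply filterdiff_ext_lin. exact H2. intros y. reflexivity.
Qed.

Lemma is_derive_snd (F : R -> C) x (l : C) :
  @is_derive R_AbsRing C_R_NormedModule F x l -> is_derive (fun y => snd (F y)) x (snd l).
Proof.
  intros H. unfold is_derive in *.
  assert (H2 := @filterdiff_comp R_AbsRing R_NormedModule
     (prod_NormedModule R_AbsRing R_NormedModule R_NormedModule) R_NormedModule
     (locally x) _ F snd (fun y => scal y l) snd H
     (filterdiff_linear _ is_linear_snd)).
  eapply filterdiff_ext_lin. exact H2. intros y. reflexivity.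
Qed.

Lemma is_derive_pairC (g1 g2 : R -> R) x d1 d2 :
  is_derive g1 x d1 -> is_derive g2 x d2 ->
  @is_derive R_AbsRing C_R_NormedModule (fun y => (g1 y, g2 y)) x (d1, d2).
Proof.
  intros H1 H2.
  assert (H := @is_derive_plus R_AbsRing C_R_NormedModule
     (fun y => scal (g1 y) ((1,0) : C)) (fun y => scal (g2 y) ((0,1) : C)) x _ _
     (@is_derive_scal_l R_AbsRing C_R_NormedModule g1 x d1 (1,0) H1)
     (@is_derive_scal_l R_AbsRing C_R_NormedModule g2 x d2 (0,1) H2)).
  eapply is_derive_ext.
  2: { replace (d1, d2) with (plus (scal d1 ((1,0):C)) (scal d2 ((0,1):C)) : C_R_NormedModule).
       exact H.
       unfold plus, scal; simpl. unfold prod_plus, prod_scal; simpl.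
       unfold plus, scal; cbn. f_equal; ring. }
  intros t. simpl. unfold plus, scal; simpl. unfold prod_plus, prod_scal; simpl.
  unfold plus, scal; cbn. f_equal; ring.
Qed.

Lemma jpr_deriv h (Hh : cutoff h) A (HA : 1 < A) (g dg : R -> R -> C) (pr : C -> R)
  (Hpr : forall a b, Rabs (pr a - pr b) <= Cmod (Cminus a b))
  (Hprd : forall (F : R -> C) x l, @is_derive R_AbsRing C_R_NormedModule F x l ->
            is_derive (fun y => pr (F y)) x (pr l))
  (Hc : continuous_on_rect A g)
  (Hd : forall y z, -A < y < 1 - A -> 0 <= z <= 1 + A ->
        @is_derive R_AbsRing C_R_NormedModule (fun y' => g y' z) y (dg y z))
  (Hdc : continuous_on_rect A dg) x (Hx : -A < x < 1 - A) :
  is_derive (fun y => RInt (fun z => B h z * pr (g y z)) 0 (y + A)) x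
    (RInt (fun z => B h z * pr (dg x z)) 0 (x + A) + B h (x + A) * pr (g x (x + A))).
Proof.
  set (cz := cl 0 (1+A)). set (cy := cl (-A) (1-A)).
  set (f1 := fun u t => B h t * pr (g u (cz t))).
  assert (Fd : forall u t, -A < u < 1 - A -> is_derive (fun u' => f1 u' t) u (B h t * pr (dg u (cz t)))).
  { intros u t Hu. unfold f1. apply is_derive_scal. apply (Hprd (fun y' => g y' (cz t))).
    apply Hd; auto. apply cl_in; lra. }
  assert (FD : forall u t, -A < u < 1 - A -> Derive (fun u' => f1 u' t) u = B h t * pr (dg u (cz t))).
  { intros u t Hu. apply is_derive_unique. apply Fd; auto. }
  assert (Fc : forall u t, -A <= u <= 1 - A -> t < 1 -> continuous (f1 u) t).
  { intros u t Hu Ht. unfold f1.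
    apply (continuous_mult (B h) (fun v => pr (g u (cz v)))).
    apply (B_cont h Hh); lra. apply cont1d_clamp; auto. }
  assert (Fc2 : forall x' t, -A < x' < 1 - A -> t < 1 ->
            continuity_2d_pt (fun u v => Derive (fun z => f1 z v) u) x' t).
  { intros x' t Hx' Ht.
    apply continuity_2d_pt_ext_loc with (f := fun u v => B h v * pr (dg (cy u) (cz v))).
    - assert (Hd0 : 0 < Rmin (x' + A) (1 - A - x')) by (apply Rmin_glb_lt; lra).
      exists (mkposreal _ Hd0). intros u v Hu Hv. simpl in Hu.
      assert (Hu' : -A < u < 1 - A).
      { apply Rabs_lt_between in Hu. pose proof (Rmin_l (x' + A) (1 - A - x')).
        pose proof (Rmin_r (x' + A) (1 - A - x')). lra. }
      rewrite FD by auto. unfold cy. rewrite cl_id by lra. reflexivity.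
    - apply continuity_2d_pt_mult. apply c2d_B; auto.
      apply (cont2d_clamp A HA dg pr Hpr Hdc). }
  assert (Hloc : forall eps, 0 < eps -> eps <= x + A -> eps <= 1 - A - x ->
            forall y, Rabs (y - x) < eps -> -A < y < 1 - A).
  { intros eps He H1 H2 y Hy. apply Rabs_lt_between in Hy. lra. }
  assert (Hm0 : 0 < Rmin (x + A) (1 - A - x)) by (apply Rmin_glb_lt; lra).
  set (m := Rmin (x + A) (1 - A - x)) in *.
  assert (Hm1 : m <= x + A) by apply Rmin_l.
  assert (Hm2 : m <= 1 - A - x) by apply Rmin_r.
  assert (Hmain := is_derive_RInt_param_bound_comp_aux3 f1 0 (fun y => y + A) x 1).
  assert (Hder : is_derive (fun x0 => RInt (fun t => f1 x0 t) 0 (x0 + A)) x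
             (RInt (fun t => Derive (fun u => f1 u t) x) 0 (x + A) + f1 x (x + A) * 1)).
  { apply Hmain.
    - apply locR. exists m. split; auto. intros y Hy.
      assert (Hy' := Hloc m Hm0 Hm1 Hm2 y Hy).
      apply (@ex_RInt_continuous R_CompleteNormedModule). intros z Hz.
      rewrite Rmin_left in Hz by lra. rewrite Rmax_right in Hz by lra.
      apply Fc; lra.
    - assert (He : 0 < (1 - A - x) / 2) by lra.
      exists (mkposreal _ He). apply locR. exists m. split; auto. intros y Hy.
      assert (Hy' := Hloc m Hm0 Hm1 Hm2 y Hy). simpl.
      apply (@ex_RInt_continuous R_CompleteNormedModule). intros z Hz.
      rewrite Rmin_left in Hz by lra. rewrite Rmax_right in Hz by lra.
      apply Fc; lra.
    - apply (is_derive_plus (fun y => y) (fun _ => A) x 1 0 (is_derive_id x) (is_derive_const A x)) || idtac.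
      replace 1 with (plus (one : R_AbsRing) (zero : R_NormedModule)) by (cbn; ring).
      apply (is_derive_plus (fun y => y) (fun _ => A) x 1 0 (is_derive_id x) (is_derive_const A x)).
    - exists (mkposreal _ Rlt_0_1). apply locR. exists m. split; auto. intros y Hy.
      assert (Hy' := Hloc m Hm0 Hm1 Hm2 y Hy). intros t _. eexists. apply Fd; auto.
    - intros t Ht. rewrite Rmin_left in Ht by lra. rewrite Rmax_right in Ht by lra.
      apply Fc2; auto; lra.
    - assert (He : 0 < (1 - A - x) / 2) by lra.
      exists (mkposreal _ (Rmin_glb_lt _ _ _ Hm0 He)). intros u v Hu Hv. simpl in Hu, Hv.
      pose proof (Rmin_l m ((1 - A - x) / 2)). pose proof (Rmin_r m ((1 - A - x) / 2)).
      apply Fc2.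
      + apply Rabs_lt_between in Hu. lra.
      + apply Rabs_lt_between in Hv. lra.
    - apply continuity_pt_filterlim. apply Fc; lra. }
  eapply is_derive_ext_loc.
  2: { replace (RInt (fun z => B h z * pr (dg x z)) 0 (x + A) + B h (x + A) * pr (g x (x + A)))
         with (RInt (fun t => Derive (fun u => f1 u t) x) 0 (x + A) + f1 x (x + A) * 1).
       exact Hder.
       f_equal.
       - apply RInt_ext. intros t Ht. rewrite Rmin_left in Ht by lra. rewrite Rmax_right in Ht by lra.
         rewrite FD by auto. unfold cz. rewrite cl_id by lra. reflexivity.
       - unfold f1, cz. rewrite cl_id by lra. ring. }
  apply locR. exists m. split; auto. intros y Hy.
  assert (Hy' := Hloc m Hm0 Hm1 Hm2 y Hy).
  apply RInt_ext. intros t Ht. rewrite Rmin_left in Ht by lra. rewrite Rmax_right in Ht by lra.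
  unfold f1, cz. rewrite cl_id by lra. reflexivity.
Qed.

Definition Gp h A (f df : R -> R -> C) y : C :=
  plus (plus (scal (- kk h (y + A)) (G h A f y)) (f y (y + A))) (G h A df y).

Lemma G_deriv h (Hh : cutoff h) A (HA : 1 < A) (f df : R -> R -> C)
  (Hc : continuous_on_rect A f)
  (Hd : forall y z, -A < y < 1 - A -> 0 <= z <= 1 + A ->
        @is_derive R_AbsRing C_R_NormedModule (fun y' => f y' z) y (df y z))
  (Hdc : continuous_on_rect A df) x (Hx : -A < x < 1 - A) :
  @is_derive R_AbsRing C_R_NormedModule (G h A f) x (Gp h A f df x).
Proof.
  set (T := x + A).
  set (j1 := fun y => RInt (fun z => B h z * fst (f y z)) 0 (y + A)).
  set (j2 := fun y => RInt (fun z => B h z * snd (f y z)) 0 (y + A)).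
  assert (HBd : is_derive (fun y => B h (y + A)) x (kk h T * B h T)).
  { assert (H := is_derive_comp (B h) (fun y => y + A) x (kk h T * B h T) 1
       (B_deriv h Hh T ltac:(unfold T; lra))
       ltac:(replace 1 with (plus (one : R_AbsRing) (zero : R_NormedModule)) by (cbn; ring);
             apply (is_derive_plus (fun y => y) (fun _ => A) x 1 0 (is_derive_id x) (is_derive_const A x)))).
    replace (kk h T * B h T) with (scal 1 (kk h T * B h T)) by (cbn; ring). exact H. }
  assert (HBinv := is_derive_inv _ x _ HBd (Rgt_not_eq _ _ (B_pos h T))).
  assert (Hj1 := jpr_deriv h Hh A HA f df fst fst_bound is_derive_fst Hc Hd Hdc x Hx).
  assert (Hj2 := jpr_deriv h Hh A HA f df snd snd_bound is_derive_snd Hc Hd Hdc x Hx).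
  assert (Hm1 := is_derive_mult _ _ x _ _ HBinv Hj1 (fun n m => Rmult_comm n m)).
  assert (Hm2 := is_derive_mult _ _ x _ _ HBinv Hj2 (fun n m => Rmult_comm n m)).
  assert (HP := is_derive_pairC _ _ x _ _ Hm1 Hm2).
  eapply is_derive_ext_loc.
  2: { match type of HP with is_derive _ _ ?v => replace (Gp h A f df x) with v end.
       exact HP.
       unfold Gp. rewrite (G_comp h Hh A HA f Hc x ltac:(lra)).
       rewrite (G_comp h Hh A HA df Hdc x ltac:(lra)).
       pose proof (B_pos h T). fold T.
       apply injective_projections; unfold plus, scal, mult; cbn; field; lra. }
  apply locR. exists (Rmin (x + A) (1 - A - x)). split. apply Rmin_glb_lt; lra.
  intros y Hy. apply Rabs_lt_between in Hy.
  pose proof (Rmin_l (x + A) (1 - A - x)). pose proof (Rmin_r (x + A) (1 - A - x)).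
  rewrite (G_comp h Hh A HA f Hc y ltac:(lra)). reflexivity.
Qed.

Lemma Cmod_minus_le (a b : C) :
  Cmod (@minus (NormedModule.AbelianGroup R_AbsRing C_R_NormedModule) a b) <= Cmod a + Cmod b.
Proof.
  rewrite <- !normC. eapply Rle_trans. apply (@norm_triangle R_AbsRing C_R_NormedModule).
  rewrite (@norm_opp R_AbsRing C_R_NormedModule). lra.
Qed.

Lemma Cminus_split (c f0 fz : C) : Cmod (Cminus c fz) <= Cmod (Cminus c f0) + Cmod (Cminus fz f0).
Proof.
  replace (Cminus c fz) with (Cplus (Cminus c f0) (Copp (Cminus fz f0))).
  eapply Rle_trans. apply Cmod_triangle. rewrite Cmod_opp. lra.
  apply injective_projections; cbn; ring.
Qed.

Lemma pt_bound (Bz p' eps M : R) (c fz : C) : 0 < Bz -> Rabs p' <= eps ->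
  Cmod (Cminus c fz) <= 2 * eps -> Cmod c <= M ->
  Cmod (@minus (NormedModule.AbelianGroup R_AbsRing C_R_NormedModule) (scal (Bz * (1 + p')) c) (scal Bz fz))
    <= eps * (M + 2) * Bz.
Proof.
  intros HB Hp Hcf HcM.
  replace (@minus (NormedModule.AbelianGroup R_AbsRing C_R_NormedModule) (scal (Bz * (1 + p')) c) (scal Bz fz))
    with (Cplus (scal (Bz * p') c) (scal Bz (Cminus c fz))).
  2:{ apply injective_projections; unfold minus, plus, opp, scal; cbn; ring. }
  eapply Rle_trans. apply Cmod_triangle.
  eapply Rle_trans. apply Rplus_le_compat; apply G_scal_bound.
  rewrite Rabs_mult, (Rabs_pos_eq Bz) by lra.
  assert (Rabs p' * Cmod c <= eps * M).
  { apply Rmult_le_compat; auto using Rabs_pos, Cmod_ge_0. }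
  assert (Bz * Rabs p' * Cmod c <= Bz * (eps * M)) by (rewrite Rmult_assoc; apply Rmult_le_compat_l; lra).
  assert (Bz * Cmod (Cminus c fz) <= Bz * (2 * eps)) by (apply Rmult_le_compat_l; lra).
  nra.
Qed.

Lemma is_RInt_Psi'_c h (Hh : cutoff h) s T (c : C) : 0 < s <= T -> T < 1 ->
  @is_RInt C_R_NormedModule (fun z => scal (Psi' h z) c) s T (scal (Psi h T - Psi h s) c).
Proof.
  intros Hs HT.
  assert (H := @is_RInt_derive C_R_CompleteNormedModule (fun z => scal (Psi h z) c)
                 (fun z => scal (Psi' h z) c) s T).
  replace (scal (Psi h T - Psi h s) c) with
    (@minus (NormedModule.AbelianGroup R_AbsRing C_R_NormedModule) (scal (Psi h T) c) (scal (Psi h s) c)).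
  2:{ apply injective_projections; unfold minus, plus, opp, scal; cbn; ring. }
  apply H.
  - intros x Hx. rewrite Rmin_left in Hx by lra. rewrite Rmax_right in Hx by lra.
    apply (@is_derive_scal_l R_AbsRing C_R_NormedModule). apply Psi_deriv; auto; lra.
  - intros x Hx. rewrite Rmin_left in Hx by lra. rewrite Rmax_right in Hx by lra.
    apply (@continuous_scal_l R_UniformSpace R_AbsRing C_R_NormedModule).
    apply Psi'_cont; auto; lra.
Qed.

Lemma part_ii_lim h (Hh : cutoff h) A (HA : 1 < A) (f : R -> R -> C) :
  bounded_on_rect A f -> continuous_on_rect A f ->
  forall eta, 0 < eta -> exists s, s < 1 /\ forall y, s - A <= y < 1 - A ->
    Cmod (plus (scal (- kk h (y + A)) (G h A f y)) (f y (y + A))) < eta.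
Proof.
  intros [M HM] Hc eta Heta.
  assert (HM0 : 0 <= M).
  { eapply Rle_trans. apply Cmod_ge_0. apply (HM (-A) 0). split; lra. }
  set (eps := Rmin (1/2) (eta / (4 * (M + 2)))).
  assert (He0 : 0 < eps) by (apply Rmin_glb_lt; [lra|apply Rdiv_lt_0_compat; lra]).
  assert (He1 : eps <= 1/2) by apply Rmin_l.
  assert (He2 : 2 * eps * (M + 2) <= eta / 2).
  { assert (eps <= eta / (4 * (M + 2))) by apply Rmin_r.
    assert (eps * (4 * (M + 2)) <= eta).
    { apply Rmult_le_reg_r with (/ (4 * (M + 2))). apply Rinv_0_lt_compat; lra.
      rewrite Rmult_assoc, Rinv_r by lra. lra. }
    lra. }
  set (f0 := f (1 - A) 1).
  destruct (Hc (1 - A) 1 ltac:(split; lra) eps He0) as [d [Hd Hcd]].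
  destruct (near1 h Hh eps d He0 Hd) as [s [Hs [Hsd Hb]]].
  assert (Hb2 : forall z, s <= z <= 1 -> Rabs (phi' h z) <= 1/2).
  { intros z Hz. eapply Rle_trans. apply Hb; auto. auto. }
  set (R0 := Psi h s * (1 - s)).
  assert (HR0 : 0 < R0) by (unfold R0; apply Rmult_lt_0_compat; [apply Psi_pos; auto|lra]).
  set (Q := Psi h s * M + (M * s * B h s + 2 * M * Psi h s)).
  assert (HQ : 0 <= Q).
  { unfold Q. pose proof (Psi_pos h Hh s Hs). pose proof (B_pos h s).
    assert (0 <= M * s * B h s) by (apply Rmult_le_pos; [apply Rmult_le_pos|]; lra).
    nra. }
  assert (Hq : 0 < eta * R0 / (2 * (Q + 1))) by (apply Rdiv_lt_0_compat; nra).
  exists (Rmax s (1 - eta * R0 / (2 * (Q + 1)))). split.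
  { apply Rmax_lub_lt; lra. }
  intros y Hy.
  set (T := y + A).
  assert (HT : s <= T < 1) by (pose proof (Rmax_l s (1 - eta * R0 / (2 * (Q + 1)))); unfold T; lra).
  assert (HT1 : 1 - T <= eta * R0 / (2 * (Q + 1)))
    by (pose proof (Rmax_r s (1 - eta * R0 / (2 * (Q + 1)))); unfold T; lra).
  assert (Hyr : -A <= y <= 1 - A) by (unfold T in HT; lra).
  set (c := f y T).
  assert (Hcm : Cmod c <= M) by (apply HM; split; unfold T in *; lra).
  set (F := fun z => scal (B h z) (f y z) : C_R_NormedModule).
  assert (HiF : forall a b, 0 <= a <= b -> b < 1 -> @ex_RInt C_R_NormedModule F a b).
  { intros a b Hab Hb1. apply exRInt_C.
    + apply (exRInt_comp h Hh A HA f fst fst_bound Hc y a b); auto.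
    + apply (exRInt_comp h Hh A HA f snd snd_bound Hc y a b); auto. }
  assert (Hi1 := @RInt_correct C_R_CompleteNormedModule F 0 s (HiF 0 s ltac:(lra) ltac:(lra))).
  assert (Hi2 := @RInt_correct C_R_CompleteNormedModule F s T (HiF s T ltac:(lra) ltac:(lra))).
  set (I1 := @RInt C_R_CompleteNormedModule F 0 s) in *.
  set (I2 := @RInt C_R_CompleteNormedModule F s T) in *.
  assert (HG : G h A f y = scal (/ B h T) (plus I1 I2)).
  { unfold G. fold T. f_equal.
    apply (@is_RInt_unique C_R_CompleteNormedModule F 0 T).
    apply (is_RInt_Chasles F 0 s T _ _ Hi1 Hi2). }
  rewrite HG. fold T. fold c.
  assert (HB1 : Cmod I1 <= M * s * B h s + 2 * M * Psi h s).
  { apply (est0 h Hh s Hs Hb2 (f y) M s ltac:(lra)).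
    intros z Hz. apply HM. split; lra. apply HiF; lra. }
  assert (HB2 : Cmod (@minus (NormedModule.AbelianGroup R_AbsRing C_R_NormedModule)
                        (scal (Psi h T - Psi h s) c) I2) <= 2 * eps * (M + 2) * (Psi h T - Psi h s)).
  { assert (Hr := @is_RInt_minus C_R_NormedModule _ _ s T _ _ (is_RInt_Psi'_c h Hh s T c ltac:(lra) ltac:(lra)) Hi2).
    assert (Hp := @is_RInt_scal R_NormedModule (Psi' h) s T (2 * eps * (M + 2)) _ (Psi_int h Hh s T ltac:(lra) ltac:(lra))).
    rewrite <- normC.
    eapply Rle_trans. apply (@norm_RInt_le C_R_NormedModule (fun z => @minus (NormedModule.AbelianGroup R_AbsRing C_R_NormedModule) (scal (Psi' h z) c) (F z)) (fun z => scal (2 * eps * (M + 2)) (Psi' h z)) s T _ _ ltac:(lra) ) ; [|exact Hr|exact Hp].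
    2: { right. reflexivity. }
    intros z Hz. rewrite normC. unfold F. unfold Psi'.
    eapply Rle_trans. apply pt_bound with (M := M).
    - apply B_pos.
    - apply Hb; lra.
    - eapply Rle_trans. apply (Cminus_split c f0 (f y z)).
      assert (Hyd : Rabs (y - (1 - A)) < d).
      { rewrite Rabs_left1 by (unfold T in HT; lra). unfold T in HT; lra. }
      assert (Cmod (Cminus c f0) < eps).
      { apply Hcd. split; unfold T in *; lra. auto.
        rewrite Rabs_left1 by lra. lra. }
      assert (Cmod (Cminus (f y z) f0) < eps).
      { apply Hcd. split; unfold T in *; lra. auto.
        rewrite Rabs_left1 by lra. lra. }
      lra.
    - exact Hcm.
    - change (eps * (M + 2) * B h z <= 2 * eps * (M + 2) * (B h z * (1 + phi' h z))).
      assert (HH := Psi'_ge h z eps He1 (Hb z ltac:(lra))). unfold Psi' in HH.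
      assert (0 <= eps * (M + 2)) by nra.
      nra. }
  set (E := plus (scal (- kk h T) (scal (/ B h T) (plus I1 I2))) c).
  assert (HphiT : 0 < phi h T) by (apply phi_pos; auto; lra).
  assert (HkT : kk h T = / phi h T).
  { pose proof (kk_phi h Hh T ltac:(lra)) as Hk. apply Rmult_eq_reg_r with (phi h T); [|lra].
    rewrite Hk, Rinv_l; lra. }
  pose proof (B_pos h T) as HBT.
  assert (HPT : 0 < Psi h T) by (apply Psi_pos; auto; lra).
  assert (Hid : E = scal (/ Psi h T)
             (plus (@minus (NormedModule.AbelianGroup R_AbsRing C_R_NormedModule) (scal (Psi h s) c) I1)
                   (@minus (NormedModule.AbelianGroup R_AbsRing C_R_NormedModule) (scal (Psi h T - Psi h s) c) I2))).
  { unfold E. rewrite HkT. unfold Psi in *.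
    apply injective_projections; unfold minus, plus, opp, scal, mult; cbn; field; lra. }
  change (Cmod E < eta). rewrite Hid.
  eapply Rle_lt_trans. apply G_scal_bound.
  rewrite Rabs_pos_eq by (left; apply Rinv_0_lt_compat; auto).
  rewrite <- normC. eapply Rle_lt_trans.
  { apply Rmult_le_compat_l. left; apply Rinv_0_lt_compat; auto.
    apply (@norm_triangle R_AbsRing C_R_NormedModule). }
  rewrite !normC.
  assert (HB1' := Cmod_minus_le (scal (Psi h s) c) I1).
  assert (Hsc := G_scal_bound (Psi h s) c).
  rewrite Rabs_pos_eq in Hsc by (left; apply Psi_pos; auto).
  assert (HPs := Psi_pos h Hh s Hs).
  assert (Hsum : Cmod (@minus (NormedModule.AbelianGroup R_AbsRing C_R_NormedModule) (scal (Psi h s) c) I1) +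
                 Cmod (@minus (NormedModule.AbelianGroup R_AbsRing C_R_NormedModule) (scal (Psi h T - Psi h s) c) I2)
                 <= Q + 2 * eps * (M + 2) * Psi h T).
  { unfold Q. assert (Psi h s * Cmod c <= Psi h s * M) by (apply Rmult_le_compat_l; lra).
    assert (2 * eps * (M + 2) * (Psi h T - Psi h s) <= 2 * eps * (M + 2) * Psi h T).
    { apply Rmult_le_compat_l; nra. }
    lra. }
  apply Rle_lt_trans with (/ Psi h T * (Q + 2 * eps * (M + 2) * Psi h T)).
  { apply Rmult_le_compat_l. left; apply Rinv_0_lt_compat; auto. exact Hsum. }
  replace (/ Psi h T * (Q + 2 * eps * (M + 2) * Psi h T)) with (Q / Psi h T + 2 * eps * (M + 2)) by (field; lra).
  assert (HR := R_mono h Hh s eps Hs He1 Hb T HT). fold R0 in HR.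
  assert (Q / Psi h T <= Q * (1 - T) / R0).
  { unfold Rdiv. rewrite (Rmult_assoc Q). apply Rmult_le_compat_l; auto.
    apply Rmult_le_reg_r with (Psi h T * R0). nra.
    replace (/ Psi h T * (Psi h T * R0)) with R0 by (field; lra).
    replace ((1 - T) * / R0 * (Psi h T * R0)) with (Psi h T * (1 - T)) by (field; lra). lra. }
  assert (Q * (1 - T) / R0 < eta / 2).
  { apply Rle_lt_trans with (Q * (eta * R0 / (2 * (Q + 1))) / R0).
    { unfold Rdiv. apply Rmult_le_compat_r. left; apply Rinv_0_lt_compat; auto.
      apply Rmult_le_compat_l; auto. }
    replace (Q * (eta * R0 / (2 * (Q + 1))) / R0) with (eta / 2 * (Q / (Q + 1))) by (field; lra).
    assert (Q / (Q + 1) < 1).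
    { apply Rmult_lt_reg_r with (Q + 1). lra. unfold Rdiv. rewrite Rmult_assoc, Rinv_l by lra. lra. }
    nra. }
  lra.
Qed.

Theorem mainTheorem2 (h : R -> R) (A : R) (Hh : cutoff h) (HA : 1 < A) :
  (* (i) *)
  (forall f : R -> R -> C,
     bounded_on_rect A f ->
     (forall y T, -A <= y <= 1 - A -> 0 <= T <= 1 + A -> ex_RInt (f y) 0 T) ->
     filterlim (G h A f) (at_left (1 - A)) (locally (0 : C))) /\
  (* (ii) *)
  (forall f df : R -> R -> C,
     bounded_on_rect A f ->
     continuous_on_rect A f ->
     (forall y z, -A < y < 1 - A -> 0 <= z <= 1 + A ->
        is_derive (fun y' => f y' z) y (df y z)) ->
     continuous_on_rect A df ->
     bounded_on_rect A df ->
     exists G' : R -> C,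
       (forall y, -A < y < 1 - A -> is_derive (G h A f) y (G' y)) /\
       filterlim G' (at_left (1 - A)) (locally (0 : C))).
Proof.
  split.
  - intros f Hb _. apply atleft_crit. apply part_i; auto.
  - intros f df Hb Hc Hd Hdc Hdb. exists (Gp h A f df). split.
    + intros y Hy. apply G_deriv; auto.
    + apply atleft_crit. intros eta Heta.
      destruct (part_ii_lim h Hh A HA f Hb Hc (eta / 2) ltac:(lra)) as [s1 [Hs1 H1]].
      destruct (part_i h Hh A HA df Hdb (eta / 2) ltac:(lra)) as [s2 [Hs2 H2]].
      exists (Rmax s1 s2). split. apply Rmax_lub_lt; auto.
      intros y Hy. pose proof (Rmax_l s1 s2). pose proof (Rmax_r s1 s2).
      unfold Gp. rewrite <- normC.
      eapply Rle_lt_trans. apply (@norm_triangle R_AbsRing C_R_NormedModule).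
      rewrite !normC.
      assert (Cmod (plus (scal (- kk h (y + A)) (G h A f y)) (f y (y + A))) < eta / 2) by (apply H1; lra).
      assert (Cmod (G h A df y) < eta / 2) by (apply H2; lra).
      lra.
Qed.
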